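(* Let $(A,\circ)$ be a permutative algebra and let $(A[[\hbar]],\triangleright_{\hbar},\triangleleft_{\hbar})$ be a diassociative formal deformation of $A$, given by bilinear operations $\triangleright_i,\triangleleft_i:A\otimes A\to A$ ($i\geq 0$). Define a bilinear operation $[\cdot,\cdot]:A\otimes A\to A$ by $[x,y]=x\triangleright_1 y-y\triangleleft_1 x$ for all $x,y\in A$. Then $(A,\circ,[\cdot,\cdot])$ is a dual pre-Poisson algebra.
   Context: Work over a field $\mathbb{F}$ of characteristic $0$. A permutative algebra is a vector space with a bilinear product $\circ$ satisfying $x\circ(y\circ z)=(x\circ y)\circ z=(y\circ x)\circ z$. A dialgebra (diassociative algebra) over a commutative ring is a module with two associative bilinear products $\triangleright,\triangleleft$ satisfying $(x\triangleleft y)\triangleleft z=x\triangleleft(y\triangleright z)$, $(x\triangleright y)\triangleleft z=x\triangleright(y\triangleleft z)$, $(x\triangleleft y)\triangleright z=x\triangleright(y\triangleright z)$. A diassociative formal deformation of a permutative algebra $(A,\circ)$ is a sequence of bilinear operations $\triangleright_i,\triangleleft_i:A\otimes A\to A$, $i\geq0$, with $x\triangleright_0 y:=x\circ y=:y\triangleleft_0 x$ for all $x,y\in A$, such that $(A[[\hbar]],\triangleright_\hbar,\triangleleft_\hbar)$ is a dialgebra over $\mathbb{F}[[\hbar]]$, where $\triangleright_\hbar,\triangleleft_\hbar$ are the $\mathbb{F}[[\hbar]]$-bilinear operations determined by $x\triangleright_\hbar y=\sum_{i\ge0}(x\triangleright_i y)\hbar^i$ and $x\triangleleft_\hbar y=\sum_{i\ge0}(x\triangleleft_i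 y)\hbar^i$ for $x,y\in A$. A dual pre-Poisson algebra is a vector space $A$ with bilinear operations $\circ,[\cdot,\cdot]$ such that $(A,\circ)$ is permutative, $[x,[y,z]]=[[x,y],z]+[y,[x,z]]$, $[x,y\circ z]=[x,y]\circ z+y\circ[x,z]$, $[x\circ y,z]=x\circ[y,z]+y\circ[x,z]$ and $[x,y]\circ z=-[y,x]\circ z$ for all $x,y,z$. *)

(* Defs.v *)
From HB Require Import structures.
From mathcomp Require Import all_boot all_order all_algebra.
Set Implicit Arguments. Unset Strict Implicit. Unset Printing Implicit Defensive.
Import GRing.Theory.
Local Open Scope ring_scope.

Section Defs.
Variables (F : fieldType) (A : lmodType F).

Definition bilinear_op (f : A -> A -> A) : Prop :=
  (forall (a : F) (x y z : A), f (a *: x + y) z = a *: f x z + f y z) /\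
  (forall (a : F) (x y z : A), f z (a *: x + y) = a *: f z x + f z y).

Definition permutative (mul : A -> A -> A) : Prop :=
  bilinear_op mul /\
  forall x y z : A,
    mul x (mul y z) = mul (mul x y) z /\ mul (mul x y) z = mul (mul y x) z.

(* A[[h]] is modelled as sequences of coefficients nat -> A. *)
Definition hseries := nat -> A.

(* The F[[h]]-bilinear operation determined by x op_h y = sum_i (x op_i y) h^i
   for x, y in A: on series, coefficient n of (x op_h y) is
   sum_{i + j + k = n} (x_j op_i y_k). *)
Definition hop (op : nat -> A -> A -> A) (x y : hseries) : hseries :=
  fun n => \sum_(i < n.+1) \sum_(j < (n - i).+1) op i (x j) (y (n - i - j)%N).

(* dialgebra axioms for (A[[h]], |>, <|) ; the operations are F[[h]]-bilinear
   by construction (hop is the F[[h]]-bilinear extension), so only the identities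
   are required here. *)
Definition hdialgebra (rt lt : hseries -> hseries -> hseries) : Prop :=
  forall x y z : hseries,
    [/\ rt (rt x y) z = rt x (rt y z),
        lt (lt x y) z = lt x (lt y z),
        lt (lt x y) z = lt x (rt y z),
        lt (rt x y) z = rt x (lt y z)
      & rt (lt x y) z = rt x (rt y z)].

Definition diass_formal_deformation (mul : A -> A -> A)
    (rt lt : nat -> A -> A -> A) : Prop :=
  [/\ forall i, bilinear_op (rt i),
      forall i, bilinear_op (lt i),
      forall x y, rt 0%N x y = mul x y,
      forall x y, lt 0%N y x = mul x y
    & hdialgebra (hop rt) (hop lt)].

Definition dual_pre_Poisson (mul br : A -> A -> A) : Prop :=
  [/\ permutative mul /\ bilinear_op br,
      forall x y z, br x (br y z) = br (br x y) z + br y (br x z),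
      forall x y z, br x (mul y z) = mul (br x y) z + mul y (br x z),
      forall x y z, br (mul x y) z = mul x (br y z) + mul y (br x z)
    & forall x y z, mul (br x y) z = - mul (br y x) z].

End Defs.

(* Main.v *)
Require Import Defs.
From HB Require Import structures.
From mathcomp Require Import all_boot all_order all_algebra.
Import GRing.Theory.
Local Open Scope ring_scope.

Inductive zexp := ZAtom of nat | ZZero | ZAdd of zexp & zexp | ZOpp of zexp.

Fixpoint ladd (s t : seq int) : seq int := match s, t with
  | [::], _ => t | _, [::] => s | a :: s', b :: t' => (a + b) :: ladd s' t' end.

Fixpoint znorm e : seq int := match e with
  | ZAtom n => rcons (nseq n 0) 1
  | ZZero => [::]
  | ZAdd a b => ladd (znorm a) (znorm b)
  | ZOpp a => map (fun c => - c) (znorm a) end.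

Section ZN.
Variable V : zmodType.
Fixpoint zint (env : seq V) e : V := match e with
  | ZAtom n => nth 0 env n | ZZero => 0
  | ZAdd a b => zint env a + zint env b | ZOpp a => - zint env a end.
Fixpoint sem (env : seq V) (s : seq int) : V := match s with
  | [::] => 0 | c :: s' => head 0 env *~ c + sem (behead env) s' end.

Lemma sem_add env s t : sem env (ladd s t) = sem env s + sem env t.
Proof.
elim: s env t => [|a s IH] env [|b t] /=; rewrite ?addr0 ?add0r //.
by rewrite IH mulrzDr addrACA.
Qed.

Lemma sem_opp env s : sem env (map (fun c => - c) s) = - sem env s.
Proof. by elim: s env => [|a s IH] env /=; rewrite ?oppr0 // IH mulrNz opprD. Qed.

Lemma sem_nil s : sem [::] s = 0.
Proof. by elim: s => //= c s ->; rewrite mul0rz addr0. Qed.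

Lemma sem_atom env n : sem env (rcons (nseq n 0) 1) = nth 0 env n.
Proof.
elim: n env => [|n IH] [|e env] /=; rewrite ?sem_nil ?mul0rz ?add0r ?nth_nil ?mulr1z ?addr0 ?mulr0z ?IH //.
Qed.

Lemma zint_sem env e : zint env e = sem env (znorm e).
Proof.
elim: e => [n||a Ha b Hb|a Ha] /=.
- by rewrite sem_atom.
- by [].
- by rewrite sem_add Ha Hb.
- by rewrite sem_opp Ha.
Qed.

Lemma sem_zero env s : all (fun c => c == 0) s -> sem env s = 0.
Proof.
elim: s env => [|c s IH] env //= /andP [/eqP -> H].
by rewrite mulr0z add0r IH.
Qed.

Lemma zeq env a b : all (fun c => c == 0) (znorm (ZAdd a (ZOpp b))) ->
  zint env a = zint env b.
Proof.
move=> H; apply/eqP; rewrite -subr_eq0; apply/eqP.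
by have := @sem_zero env _ H; rewrite -zint_sem.
Qed.
End ZN.

Ltac inlist x l := lazymatch l with
  | nil => constr:(false) | cons x _ => constr:(true)
  | cons _ ?l' => inlist x l' end.
Ltac collect t l := lazymatch t with
  | (?a + ?b)%R => let l := collect a l in collect b l
  | (- ?a)%R => collect a l
  | 0%R => l
  | _ => let b := inlist t l in
         lazymatch b with true => l | false => constr:(cons t l) end end.
Ltac index x l := lazymatch l with
  | cons x _ => constr:(0%N)
  | cons _ ?l' => let n := index x l' in constr:(S n) end.
Ltac reify t l := lazymatch t with
  | (?a + ?b)%R => let ra := reify a l in let rb := reify b l in constr:(ZAdd ra rb)
  | (- ?a)%R => let ra := reify a l in constr:(ZOpp ra)
  | 0%R => constr:(ZZero)
  | _ => let n := index t l in constr:(ZAtom n) end.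
Ltac zmod_eq := lazymatch goal with |- @eq ?T ?a ?b =>
  let l := collect a (@nil T) in let l := collect b l in
  let ra := reify a l in let rb := reify b l in
  apply: (@zeq _ l ra rb); vm_compute; reflexivity end.

Lemma zlin (V : zmodType) (L R S : V) : L - R = S -> S = 0 -> L = R.
Proof. by move=> H H0; apply/eqP; rewrite -subr_eq0 H H0. Qed.

Ltac diff H := lazymatch type of H with ?l = ?r => constr:(l - r) end.

Set Implicit Arguments. Unset Strict Implicit.
Section Main.
Variables (F : fieldType) (A : lmodType F).

Section Lin.
Variable f : A -> A -> A.
Hypothesis Hf : bilinear_op f.
Lemma lin0l z : f 0 z = 0.
Proof. by have := Hf.1 (-1) z z z; rewrite !scaleN1r !addNr. Qed.
Lemma lin0r z : f z 0 = 0.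
Proof. by have := Hf.2 (-1) z z z; rewrite !scaleN1r !addNr. Qed.
Lemma linDl x y z : f (x + y) z = f x z + f y z.
Proof. by have := Hf.1 1 x y z; rewrite !scale1r. Qed.
Lemma linDr x y z : f z (x + y) = f z x + f z y.
Proof. by have := Hf.2 1 x y z; rewrite !scale1r. Qed.
Lemma linZl a x z : f (a *: x) z = a *: f x z.
Proof. by have := Hf.1 a x 0 z; rewrite lin0l !addr0. Qed.
Lemma linZr a x z : f z (a *: x) = a *: f z x.
Proof. by have := Hf.2 a x 0 z; rewrite lin0r !addr0. Qed.
Lemma linNl x z : f (- x) z = - f x z.
Proof. by rewrite -scaleN1r linZl scaleN1r. Qed.
Lemma linNr x z : f z (- x) = - f z x.
Proof. by rewrite -scaleN1r linZr scaleN1r. Qed.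
Lemma linBl x y z : f (x - y) z = f x z - f y z.
Proof. by rewrite linDl linNl. Qed.
Lemma linBr x y z : f z (x - y) = f z x - f z y.
Proof. by rewrite linDr linNr. Qed.
End Lin.

Definition cst (x : A) : hseries A := fun n => if n is 0%N then x else 0.

Section Hop.
Variables op op' : nat -> A -> A -> A.
Hypothesis Hop : forall i, bilinear_op (op i).
Hypothesis Hop' : forall i, bilinear_op (op' i).

Lemma hop_cl x v n : hop op (cst x) v n = \sum_(i < n.+1) op i x (v (n - i)%N).
Proof.
apply: eq_bigr => i _; rewrite big_ord_recl /= subn0 big1 ?addr0 // => j _.
by rewrite lin0l.
Qed.

Lemma hop_cr u z n : hop op u (cst z) n = \sum_(i < n.+1) op i (u (n - i)%N) z.
Proof.
apply: eq_bigr => i _; rewrite big_ord_recr /= subnn big1 ?add0r // => j _.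
case: j => j /= Hj.
have -> : (n - i - j = (n - i - j).-1.+1)%N by rewrite prednK // subn_gt0.
by rewrite lin0r.
Qed.

Lemma hop_cc x y n : hop op (cst x) (cst y) n = op n x y.
Proof.
rewrite hop_cl big_ord_recr /= subnn big1 ?add0r // => i _.
case: i => i /= Hi.
have -> : (n - i = (n - i).-1.+1)%N by rewrite prednK // subn_gt0.
by rewrite lin0r.
Qed.
End Hop.
Section Hop2.
Variables op op' : nat -> A -> A -> A.
Hypothesis Hop : forall i, bilinear_op (op i).
Hypothesis Hop' : forall i, bilinear_op (op' i).

Lemma hopL1 x y z : hop op (hop op' (cst x) (cst y)) (cst z) 1 =
  op 0%N (op' 1%N x y) z + op 1%N (op' 0%N x y) z.
Proof. by rewrite (hop_cr Hop) !big_ord_recr big_ord0 /= !(hop_cc Hop') add0r. Qed.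
Lemma hopR1 x y z : hop op (cst x) (hop op' (cst y) (cst z)) 1 =
  op 0%N x (op' 1%N y z) + op 1%N x (op' 0%N y z).
Proof. by rewrite (hop_cl Hop) !big_ord_recr big_ord0 /= !(hop_cc Hop') add0r. Qed.
Lemma hopL2 x y z : hop op (hop op' (cst x) (cst y)) (cst z) 2 =
  op 0%N (op' 2%N x y) z + op 1%N (op' 1%N x y) z + op 2%N (op' 0%N x y) z.
Proof. by rewrite (hop_cr Hop) !big_ord_recr big_ord0 /= !(hop_cc Hop') add0r. Qed.
Lemma hopR2 x y z : hop op (cst x) (hop op' (cst y) (cst z)) 2 =
  op 0%N x (op' 2%N y z) + op 1%N x (op' 1%N y z) + op 2%N x (op' 0%N y z).
Proof. by rewrite (hop_cl Hop) !big_ord_recr big_ord0 /= !(hop_cc Hop') add0r. Qed.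
End Hop2.
End Main.

Ltac inst n E Hrt Hlt H0r H0l :=
  move/(congr1 (fun s => s n)): E => E;
  rewrite ?(hopL1 Hrt Hrt) ?(hopL1 Hrt Hlt) ?(hopL1 Hlt Hrt) ?(hopL1 Hlt Hlt)
          ?(hopR1 Hrt Hrt) ?(hopR1 Hrt Hlt) ?(hopR1 Hlt Hrt) ?(hopR1 Hlt Hlt)
          ?(hopL2 Hrt Hrt) ?(hopL2 Hrt Hlt) ?(hopL2 Hlt Hrt) ?(hopL2 Hlt Hlt)
          ?(hopR2 Hrt Hrt) ?(hopR2 Hrt Hlt) ?(hopR2 Hlt Hrt) ?(hopR2 Hlt Hlt)
          ?H0r ?H0l in E.

Ltac expand Hrt Hlt Hm :=
  rewrite ?(linBl (Hrt 1%N)) ?(linBr (Hrt 1%N)) ?(linBl (Hlt 1%N)) ?(linBr (Hlt 1%N))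
          ?(linBl Hm) ?(linBr Hm).

Theorem theorem2p25 (F : fieldType) (A : lmodType F)
  (charF0 : [pchar F] =i pred0)
  (mul : A -> A -> A) (rt lt : nat -> A -> A -> A) :
  permutative mul ->
  diass_formal_deformation mul rt lt ->
  dual_pre_Poisson mul (fun x y => rt 1%N x y - lt 1%N y x).
Proof.
move=> Hp [Hrt Hlt H0r H0l Hdia].
have Hm := Hp.1.
split.
- split => //; split => a x y z.
  + rewrite (linDl (Hrt 1%N)) (linZl (Hrt 1%N)) (linDr (Hlt 1%N)) (linZr (Hlt 1%N)) scalerBr.
    zmod_eq.
  + rewrite (linDr (Hrt 1%N)) (linZr (Hrt 1%N)) (linDl (Hlt 1%N)) (linZl (Hlt 1%N)) scalerBr.
    zmod_eq.
- move=> x y z.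
  have [_ A1 _ _ _] := Hdia (cst z) (cst y) (cst x).
  have [_ _ _ _ A2] := Hdia (cst y) (cst x) (cst z).
  have [_ _ _ A3 _] := Hdia (cst x) (cst z) (cst y).
  have [_ _ A4 _ _] := Hdia (cst z) (cst x) (cst y).
  have [A5 _ _ _ _] := Hdia (cst x) (cst y) (cst z).
  have [_ _ _ A6 _] := Hdia (cst y) (cst z) (cst x).
  inst 2%N A1 Hrt Hlt H0r H0l. inst 2%N A2 Hrt Hlt H0r H0l. inst 2%N A3 Hrt Hlt H0r H0l.
  inst 2%N A4 Hrt Hlt H0r H0l. inst 2%N A5 Hrt Hlt H0r H0l. inst 2%N A6 Hrt Hlt H0r H0l.
  expand Hrt Hlt Hm.
  let s1 := diff A1 in let s2 := diff A2 in let s3 := diff A3 in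
  let s4 := diff A4 in let s5 := diff A5 in let s6 := diff A6 in
  apply: (@zlin _ _ _ (s1 + s2 + s3 - s4 - s5 - s6)); first zmod_eq.
  rewrite A1 A2 A3 A4 A5 A6; zmod_eq.
- move=> x y z.
  have [A1 _ _ _ _] := Hdia (cst x) (cst y) (cst z).
  have [_ _ _ _ A2] := Hdia (cst y) (cst x) (cst z).
  have [_ _ _ A3 _] := Hdia (cst y) (cst z) (cst x).
  inst 1%N A1 Hrt Hlt H0r H0l. inst 1%N A2 Hrt Hlt H0r H0l. inst 1%N A3 Hrt Hlt H0r H0l.
  expand Hrt Hlt Hm.
  let s1 := diff A1 in let s2 := diff A2 in let s3 := diff A3 in
  apply: (@zlin _ _ _ (- s1 + s2 - s3)); first zmod_eq.
  rewrite A1 A2 A3; zmod_eq.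
- move=> x y z.
  have [_ _ A1 _ _] := Hdia (cst z) (cst x) (cst y).
  have [A2 _ _ _ _] := Hdia (cst x) (cst y) (cst z).
  have [_ _ _ A3 _] := Hdia (cst x) (cst z) (cst y).
  inst 1%N A1 Hrt Hlt H0r H0l. inst 1%N A2 Hrt Hlt H0r H0l. inst 1%N A3 Hrt Hlt H0r H0l.
  expand Hrt Hlt Hm.
  let s1 := diff A1 in let s2 := diff A2 in let s3 := diff A3 in
  apply: (@zlin _ _ _ (s1 + s2 - s3)); first zmod_eq.
  rewrite A1 A2 A3; zmod_eq.
- move=> x y z.
  have [A1 _ _ _ _] := Hdia (cst x) (cst y) (cst z).
  have [_ _ _ _ A2] := Hdia (cst y) (cst x) (cst z).
  have [A3 _ _ _ _] := Hdia (cst y) (cst x) (cst z).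
  have [_ _ _ _ A4] := Hdia (cst x) (cst y) (cst z).
  inst 1%N A1 Hrt Hlt H0r H0l. inst 1%N A2 Hrt Hlt H0r H0l. inst 1%N A3 Hrt Hlt H0r H0l.
  inst 1%N A4 Hrt Hlt H0r H0l.
  expand Hrt Hlt Hm.
  let s1 := diff A1 in let s2 := diff A2 in let s3 := diff A3 in let s4 := diff A4 in
  apply: (@zlin _ _ _ (s1 - s2 + s3 - s4)); first zmod_eq.
  rewrite A1 A2 A3 A4; zmod_eq.
Qed.
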